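(* For every $\alpha\in[m,M]$ (where $m=\inf_{n\ge1}b_n$, $M=\sup_{n\ge1}b_n$), the level set $S_\alpha=\{x>0:\lambda(x)=\alpha\}$ has Lebesgue measure zero.
   Context: Fix integers $p\ge 3$ and $2\le s<p$, and a set $A\subset\{0,1,\dots,p-1\}$ with $\#A=s$. Let $h:\{0,1,\dots,s-1\}\to A$ be the unique strictly increasing bijection. For a positive integer $n$ with base-$s$ expansion $n=\sum_{i=0}^k\varepsilon_i s^i$ ($\varepsilon_i\in\{0,\dots,s-1\}$, $\varepsilon_k\ne 0$), put $a_n=\sum_{i=0}^k h(\varepsilon_i)p^i$, and put $a_0=h(0)$. Let $b_n=a_n/n^{\log_s p}$ for $n\ge1$. For real $x\ge0$ let $a(x)=a_{\lfloor x\rfloor}$, and for $x>0$ let $\lambda(x)=\lim_{k\to\infty}\frac{a(s^kx)}{(s^kx)^{\log_s p}}$ (this limit exists). *)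

(* Defs.v *)
From HB Require Import structures.
From mathcomp Require Import all_boot all_order all_algebra.
From mathcomp Require Import all_classical all_reals all_analysis.
Set Implicit Arguments. Unset Strict Implicit. Unset Printing Implicit Defensive.
Import Order.TTheory GRing.Theory Num.Theory numFieldNormedType.Exports.

Definition hA (p : nat) (A : {set 'I_p}) (i : nat) : nat :=
  nth 0%N (sort leq [seq val x | x <- enum A]) i.

(* a_n = sum_{i=0}^k h(eps_i) p^i, with k = trunc_log s n the index of the
   leading base-s digit (n >= 1), eps_i = (n / s^i) mod s; a_0 = h(0). *)
Definition aseq (p s : nat) (A : {set 'I_p}) (n : nat) : nat :=
  if n == 0%N then hA A 0
  else (\sum_(i < (trunc_log s n).+1) hA A ((n %/ s ^ i) %% s) * p ^ i)%N.

Local Open Scope ring_scope.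

Definition logsp {R : realType} (p s : nat) : R := ln (p%:R) / ln (s%:R).

Definition bseq {R : realType} (p s : nat) (A : {set 'I_p}) (n : nat) : R :=
  (aseq s A n)%:R / (n%:R `^ logsp p s).

Definition afun {R : realType} (p s : nat) (A : {set 'I_p}) (x : R) : R :=
  (aseq s A (Num.truncn x))%:R.

Definition lambda {R : realType} (p s : nat) (A : {set 'I_p}) (x : R) : R :=
  limn (fun k : nat => afun s A ((s%:R) ^+ k * x) / (((s%:R) ^+ k * x) `^ logsp p s)).

Definition mb {R : realType} (p s : nat) (A : {set 'I_p}) : R :=
  inf [set bseq s A n | n in [set n : nat | (1 <= n)%N]].
Definition Mb {R : realType} (p s : nat) (A : {set 'I_p}) : R :=
  sup [set bseq s A n | n in [set n : nat | (1 <= n)%N]].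

(* Main.v *)
Require Import Defs.
From HB Require Import structures.
From mathcomp Require Import all_boot all_order all_algebra.
From mathcomp Require Import all_classical all_reals all_analysis.
From mathcomp Require Import zify ring lra.
Import Order.TTheory GRing.Theory Num.Theory numFieldNormedType.Exports.

Lemma hA_lt (p : nat) (A : {set 'I_p}) i : 0 < p -> hA A i < p.
Proof.
move=> p0; rewrite /hA.
case: (ltnP i (size (sort leq [seq val x | x <- enum A]))) => hi.
  have := mem_nth 0 hi; rewrite mem_sort => /mapP [x _ ->]; exact: ltn_ord.
by rewrite nth_default.
Qed.

Lemma hA_pos (p s : nat) (A : {set 'I_p}) i : #|A| = s -> 0 < i < s -> 0 < hA A i.
Proof.
move=> hA' /andP [i0 iS].
set l := sort leq [seq val x | x <- enum A].
have sz : size l = s by rewrite size_sort size_map -cardE.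
have su : uniq l by rewrite sort_uniq map_inj_uniq ?enum_uniq //; exact: val_inj.
have so : sorted leq l by apply: sort_sorted; exact: leq_total.
have h := sorted_leq_nth leq_trans leqnn 0 so.
rewrite /hA -/l lt0n; apply/negP => /eqP h0.
have : nth 0 l 0 <= nth 0 l i by apply: h; rewrite ?inE ?sz //; lia.
rewrite h0 leqn0 => /eqP e.
have l0 : 0 < size l by rewrite sz; lia.
have li : i < size l by rewrite sz.
have := nth_uniq 0 l0 li su.
rewrite e h0 eqxx => /esym /eqP; lia.
Qed.

Lemma aseq_rec (p s : nat) (A : {set 'I_p}) n : 1 < s -> s <= n ->
  aseq s A n = p * aseq s A (n %/ s) + hA A (n %% s).
Proof.
move=> s1 sn.
have q1 : 0 < n %/ s by rewrite divn_gt0 //; lia.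
rewrite /aseq.
have -> : (n == 0) = false by apply/negbTE; lia.
have -> : (n %/ s == 0) = false by apply/negbTE; lia.
set q := n %/ s.
have tl : trunc_log s n = (trunc_log s q).+1.
  apply: trunc_log_eq => //.
  have h1 := trunc_logP s1 q1. have h2 := trunc_log_ltn q s1.
  have e := divn_eq n s. have r := ltn_pmod n (ltnW s1).
  rewrite -/q in e; rewrite !expnS in h2 *; move: h1 h2; set X := s ^ _ => h1 h2.
  apply/andP; split; first nia.
  have h3 : s * q.+1 <= s * (s * X) by rewrite leq_mul2l h2 orbT.
  nia.
rewrite tl big_ord_recl /= expn0 muln1 divn1 addnC; congr (_ + _).
rewrite big_distrr /=; apply: eq_bigr => i _.
by rewrite /bump /= add1n expnS divnMA expnS mulnCA.
Qed.

Lemma aseq_pos (p s : nat) (A : {set 'I_p}) n : 1 < s -> #|A| = s -> 0 < p -> 0 < n -> 0 < aseq s A n.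
Proof.
move=> s1 cA p0; elim: n {-2}n (leqnn n) => [|m IH] n nm n0; first lia.
case: (ltnP n s) => ns.
  rewrite /aseq. have -> : (n == 0) = false by apply/negbTE; lia.
  have -> : trunc_log s n = 0 by apply/eqP; rewrite trunc_log_eq0; apply/orP; right; lia.
  rewrite big_ord1 expn0 muln1 divn1 modn_small //.
  by apply: (@hA_pos p s A n cA); lia.
rewrite aseq_rec //.
have : 0 < aseq s A (n %/ s).
  apply: IH; last by rewrite divn_gt0 //; lia.
  have := ltn_Pdiv s1 (_ : 0 < n) ; lia.
nia.
Qed.

Local Open Scope ring_scope.

Section Real.
Variable R : realType.

Lemma s_pow_d (p s : nat) : (1 < s)%N -> (0 < p)%N ->
  (s%:R : R) `^ logsp p s = p%:R.
Proof.
move=> s1 p0; rewrite /powR pnatr_eq0 (_ : (s == 0)%N = false); last by lia.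
rewrite /logsp divfK ?lnK // ?posrE ?ltr0n //.
by rewrite gt_eqF // ln_gt0 // ltr1n.
Qed.

Lemma spow_k (p s k : nat) : (1 < s)%N -> (0 < p)%N ->
  ((s%:R : R) ^+ k) `^ logsp p s = p%:R ^+ k.
Proof.
move=> s1 p0.
by rewrite -powR_mulrn ?ler0n // -powRrM mulrC powRrM s_pow_d // powR_mulrn ?ler0n.
Qed.

Lemma d_ge1 (p s : nat) : (1 < s)%N -> (s < p)%N -> 1 <= logsp p s :> R.
Proof.
move=> s1 sp; rewrite /logsp ler_pdivlMr ?mul1r ?ln_gt0 ?ltr1n //.
by rewrite ler_ln ?posrE ?ltr0n ?ler_nat; lia.
Qed.

Lemma key_ineq (d e x y : R) : 1 <= d -> 0 < e -> e <= y -> y <= x ->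
  e `^ (d - 1) * (x - y) <= x `^ d - y `^ d.
Proof.
move=> d1 e0 ey yx.
have y0 : 0 < y by apply: lt_le_trans ey.
have h1 : x / y * y `^ d <= x `^ d.
  have := @le1r_powRZ R (x / y) y d.
  rewrite divfK ?gt_eqF //; apply => //; last exact: ltW.
  by rewrite ler_pdivlMr // mul1r.
have h2 : y `^ d = y * y `^ (d - 1) by rewrite mulr_powRB1 ?(ltW y0) //; lra.
have h3 : e `^ (d - 1) <= y `^ (d - 1).
  by apply: ge0_ler_powR => //; rewrite ?nnegrE; lra.
have h4 : x / y * y `^ d - y `^ d = (x - y) * y `^ (d - 1).
  by rewrite h2; field; rewrite gt_eqF.
have h5 : 0 <= x - y by lra.
have := ler_wpM2l h5 h3. nra.
Qed.

Lemma trunc_div (s : nat) (t : R) : (0 < s)%N -> 0 <= t ->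
  (s * Num.truncn t <= Num.truncn (s%:R * t))%N /\ (Num.truncn (s%:R * t) %/ s)%N = Num.truncn t.
Proof.
move=> s0 t0.
have h1 : (s * Num.truncn t <= Num.truncn (s%:R * t))%N.
  rewrite truncn_ge_nat ?mulr_ge0 // natrM ler_wpM2l //.
  by rewrite truncn_le.
have h2 : (Num.truncn (s%:R * t) < s * (Num.truncn t).+1)%N.
  rewrite truncn_lt_nat ?mulr_ge0 // natrM ltr_pM2l ?ltr0n //.
  by case/andP: (truncn_itv t0).
split => //; nia.
Qed.

End Real.

Local Open Scope classical_set_scope.
Local Open Scope ring_scope.

Section Lam.
Variable R : realType.
Variables (p s : nat) (A : {set 'I_p}).
Hypotheses (s1 : (1 < s)%N) (sp : (s < p)%N).
Variable x : R.
Hypothesis x0 : 0 < x.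

Let Nk k := Num.truncn ((s%:R : R) ^+ k * x).

Lemma Nk_rec k : (s * Nk k <= Nk k.+1)%N /\ (Nk k.+1 %/ s)%N = Nk k.
Proof.
rewrite /Nk exprS -mulrA; apply: trunc_div; first lia.
by rewrite mulr_ge0 ?exprn_ge0 ?ler0n ?ltW.
Qed.

Variable K : nat.
Hypothesis NK : (0 < Nk K)%N.

Lemma Nk_pos j : (0 < Nk (j + K))%N.
Proof.
elim: j => // j IH; have [h _] := Nk_rec (j + K); rewrite addSn; nia.
Qed.

Lemma a_rec j : aseq s A (Nk (j.+1 + K)) =
   (p * aseq s A (Nk (j + K)) + hA A (Nk (j.+1 + K) %% s))%N.
Proof.
have [h1 h2] := Nk_rec (j + K); have h3 := Nk_pos j.
rewrite addSn aseq_rec // ?h2 //; nia.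
Qed.

Let v j : R := (aseq s A (Nk (j + K)))%:R / p%:R ^+ (j + K).

Lemma p_pos : 0 < p%:R :> R. Proof. rewrite ltr0n; lia. Qed.

Lemma v_incr j : v j <= v j.+1.
Proof.
rewrite /v a_rec addSn exprS natrD natrM.
have hp := p_pos. have := exprn_gt0 (j + K) hp.
set P := p%:R ^+ (j + K). set a := (aseq s A _)%:R. move=> hP.
rewrite (_ : a / P = (p%:R * a) / (p%:R * P)); last first.
  by field; apply/andP; split; rewrite gt_eqF.
apply: ler_wpM2r; first by rewrite invr_ge0 mulr_ge0 // ltW.
by rewrite lerDl.
Qed.

Lemma u_decr j : v j.+1 + 1 / p%:R ^+ (j.+1 + K) <= v j + 1 / p%:R ^+ (j + K).
Proof.
rewrite /v a_rec addSn exprS natrD natrM.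
have hp := p_pos. have := exprn_gt0 (j + K) hp.
have hh : (hA A (Nk (j.+1 + K) %% s) + 1 <= p)%N by have := @hA_lt p A (Nk (j.+1 + K) %% s); lia.
move: hh; rewrite -(ler_nat R) natrD.
set P := p%:R ^+ (j + K). set a := (aseq s A _)%:R. set h := (hA A _)%:R. move=> hh hP.
rewrite -!mulrDl ler_pdivrMr ?mulr_gt0 // mulrAC ler_pdivlMr //.
nra.
Qed.

Lemma v_bound j : v j <= v 0 + 1 / p%:R ^+ K.
Proof.
have h : forall j, v j + 1 / p%:R ^+ (j + K) <= v 0 + 1 / p%:R ^+ K.
  elim=> [|i IH] //; apply: le_trans (u_decr i) IH.
have := h j; have : 0 <= 1 / (p%:R : R) ^+ (j + K).
  by rewrite divr_ge0 // exprn_ge0 // ltW // p_pos.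
lra.
Qed.


Lemma lam_eq : lambda s A x * x `^ logsp p s = sup (range v) /\
   v 0 <= sup (range v) <= v 0 + 1 / p%:R ^+ K.
Proof.
have nd : nondecreasing_seq v by apply/nondecreasing_seqP; exact: v_incr.
have ub : has_ubound (range v).
  by exists (v 0 + 1 / p%:R ^+ K) => _ [j _ <-]; exact: v_bound.
have cv := nondecreasing_cvgn nd ub.
set l := sup (range v).
have xd : 0 < x `^ logsp p s by apply: powR_gt0.
have cu : (fun k : nat => afun s A ((s%:R) ^+ k * x) / (((s%:R) ^+ k * x) `^ logsp p s))
     @ \oo --> l / x `^ logsp p s.
  rewrite -(cvg_shiftn K).
  have -> : [sequence afun s A ((s%:R) ^+ (n + K) * x) / (((s%:R) ^+ (n + K) * x) `^ logsp p s)]_n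
     = (fun n => v n * (x `^ logsp p s)^-1).
    apply/funext => n /=.
    rewrite /afun /v powRM ?exprn_ge0 ?ler0n ?ltW // spow_k //; last by lia.
    by rewrite invfM mulrA.
  exact: cvgMr_tmp.
split.
  rewrite /lambda (cvg_lim _ cu) ?divfK // ?gt_eqF //; exact: norm_hausdorff.
apply/andP; split.
  by apply: ub_le_sup => //; exists 0%N.
apply: ge_sup; first by exists (v 0), 0%N.
by move=> _ [j _ <-]; exact: v_bound.
Qed.

End Lam.

Lemma lam_bnd (R : realType) (p s : nat) (A : {set 'I_p}) (s1 : (1 < s)%N) (sp : (s < p)%N)
  (x : R) (x0 : 0 < x) K (NK : (0 < Num.truncn ((s%:R : R) ^+ K * x))%N) :
  (aseq s A (Num.truncn ((s%:R : R) ^+ K * x)))%:R / p%:R ^+ K <= lambda s A x * x `^ logsp p s <=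
  (aseq s A (Num.truncn ((s%:R : R) ^+ K * x)))%:R / p%:R ^+ K + 1 / p%:R ^+ K.
Proof. by have [-> h] := @lam_eq R p s A s1 sp x x0 K NK. Qed.



Section Meas.
Variable R : realType.
Variables (p s : nat) (A : {set 'I_p}).
Hypotheses (s1 : (1 < s)%N) (sp : (s < p)%N).
Variable alpha : R.
Hypothesis a0 : 0 < alpha.
Let d := logsp p s : R.
Let S := [set x : R | 0 < x /\ lambda s A x = alpha].
Variable j : nat.
Let sR : R := s%:R.
Let e : R := (sR ^+ j)^-1.
Let Sj := [set x | S x /\ e <= x /\ x < sR ^+ j].
Let c : R := e `^ (d - 1).
Let dl K : R := (c * alpha * p%:R ^+ (K + j))^-1.
Let T K N := [set x | Sj x /\ Num.truncn (sR ^+ (K + j) * x) = N].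

Lemma sR_gt1 : 1 < sR. Proof. by rewrite /sR ltr1n. Qed.
Lemma e_gt0 : 0 < e. Proof. by rewrite /e invr_gt0 exprn_gt0 // (lt_trans ltr01 sR_gt1). Qed.
Lemma c_gt0 : 0 < c. Proof. exact: powR_gt0 e_gt0. Qed.
Lemma pR_gt0 : 0 < p%:R :> R. Proof. by rewrite ltr0n; lia. Qed.
Lemma dl_gt0 K : 0 < dl K.
Proof. by rewrite /dl invr_gt0 !mulr_gt0 ?c_gt0 ?exprn_gt0 ?pR_gt0. Qed.

Lemma NK_pos K x : Sj x -> (0 < Num.truncn (sR ^+ (K + j) * x))%N.
Proof.
move=> [[x0 _] [ex _]]; rewrite truncn_gt0.
have hs : 1 <= sR ^+ K by rewrite exprn_ege1 // ltW // sR_gt1.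
rewrite exprD -mulrA.
have h1 : sR ^+ j * e = 1 by rewrite /e divff // expf_neq0 // gt_eqF // (lt_trans ltr01 sR_gt1).
have h2 : 0 < sR ^+ j by rewrite exprn_gt0 // (lt_trans ltr01 sR_gt1).
have h3 : 1 <= sR ^+ j * x by nra.
exact: mulr_ege1.
Qed.

Lemma close K N x y : T K N x -> T K N y -> y <= x -> x - y <= dl K.
Proof.
move=> Tx Ty yx.
have [[[x0 lx] [ex _]] Nx] := Tx. have [[[y0 ly] [ey _]] Ny] := Ty.
have := @lam_bnd R p s A s1 sp _ x0 _ (NK_pos K x Tx.1).
have := @lam_bnd R p s A s1 sp _ y0 _ (NK_pos K y Ty.1).
rewrite lx ly Nx Ny.
set a := (aseq s A N)%:R / _. set P := p%:R ^+ (K + j).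
set X := x `^ _. set Y := y `^ _.
move=> /andP[h1 h2] /andP[h3 h4].
have k : c * (x - y) <= X - Y by apply: key_ineq => //; [exact: d_ge1 | exact: e_gt0].
have hP : 0 < P by rewrite exprn_gt0 // pR_gt0.
have hc := c_gt0.
have h5 : alpha * (X - Y) * P <= 1.
  have : alpha * (X - Y) <= 1 / P by lra.
  by rewrite ler_pdivlMr.
rewrite /dl -[X in _ <= X]mul1r ler_pdivlMr ?mulr_gt0 //.
have : alpha * P * (c * (x - y)) <= alpha * P * (X - Y).
  by apply: ler_wpM2l => //; rewrite mulr_ge0 // ltW.
have e1 : (x - y) * (c * alpha * P) = alpha * P * (c * (x - y)) by ring.
have e2 : alpha * (X - Y) * P = alpha * P * (X - Y) by ring.
by move=> H; rewrite e1; apply: le_trans H _; rewrite -e2.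
Qed.


Let D K N := `[inf (T K N), inf (T K N) + dl K]%classic.
Let nn K := (s ^ (K + j + j))%N.
Let B := \bigcap_K \big[setU/set0]_(N < nn K) D K N.

Lemma in_D K N x : T K N x -> D K N x.
Proof.
move=> Tx; rewrite /D /= in_itv /=.
have lb : has_lbound (T K N).
  by exists 0 => y [[[y0 _] _] _]; exact: ltW.
apply/andP; split; first exact: ge_inf.
rewrite -lerBlDr; apply: lb_le_inf; first by exists x.
move=> y Ty; case: (leP y x) => yx.
  by have := close _ _ _ _ Tx Ty yx; lra.
by have := dl_gt0 K; lra.
Qed.

Lemma Sj_sub_B : Sj `<=` B.
Proof.
move=> x Sx K _; rewrite -bigcup_mkord.
exists (Num.truncn (sR ^+ (K + j) * x)); last by apply: in_D.
rewrite /= /nn truncn_lt_nat; last first.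
  by rewrite mulr_ge0 // ?exprn_ge0 ?ltW ?(lt_trans ltr01 sR_gt1) // Sx.1.1.
rewrite natrX -/sR (exprD sR (K + j) j) ltr_pM2l ?exprn_gt0 ?(lt_trans ltr01 sR_gt1) //.
exact: Sx.2.2.
Qed.

Lemma B_meas : measurable B.
Proof.
apply: bigcapT_measurable => K; apply: bigsetU_measurable => N _.
exact: measurable_itv.
Qed.

Lemma muB_le K : (lebesgue_measure B <= ((nn K)%:R * dl K)%:E)%E.
Proof.
apply: (@le_trans _ _ (\sum_(N < nn K) lebesgue_measure (D K N))%E).
  apply: content_subadditive => //; first by move=> k _; exact: measurable_itv.
    exact: B_meas.
  by move=> x Bx; exact: Bx K I.
apply: (@le_trans _ _ (\sum_(N < nn K) (dl K)%:E)%E).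
  apply: lee_sum => N _; rewrite /D lebesgue_measure_itv /=.
  case: ifP => _; last by rewrite lee_fin ltW // dl_gt0.
  by rewrite -EFinB lee_fin addrC addKr.
by rewrite sumEFin sumr_const card_ord mulr_natl.
Qed.


Lemma muB0 : lebesgue_measure B = 0%E.
Proof.
apply/eqP; rewrite -measure_le0; apply/lee_addgt0Pr => eps eps0; rewrite add0e.
set pR : R := p%:R.
have hp := pR_gt0; have hs : 0 < sR by apply: lt_trans ltr01 sR_gt1.
have hc := c_gt0.
set z := sR / pR.
have hz : `|z| < 1.
  rewrite ger0_norm ?divr_ge0 ?ltW // ltr_pdivrMr // mul1r /sR /pR ltr_nat //.
set C0 := sR ^+ (j + j) / (c * alpha * pR ^+ j).
have hC0 : 0 < C0 by rewrite divr_gt0 ?exprn_gt0 // !mulr_gt0 // exprn_gt0.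
have eqK K : (nn K)%:R * dl K = C0 * z ^+ K.
  rewrite /nn /dl /C0 /z natrX -/sR expr_div_n -addnA !exprD.
  by field; rewrite !gt_eqF ?exprn_gt0.
have := (cvgrPdist_lt _ _).1 (cvg_expr hz) (eps / C0) (divr_gt0 eps0 hC0).
move=> [K0 _ HK]; have := HK K0 (leqnn K0) => /=.
rewrite sub0r normrN => hK.
apply: le_trans (muB_le K0) _; rewrite lee_fin eqK.
rewrite -ler_pdivlMl // mulrC; apply: ltW; apply: le_lt_trans hK; exact: ler_norm.
Qed.

Lemma Sj_negl : (@lebesgue_measure R).-negligible Sj.
Proof. by exists B; split; [exact: B_meas | exact: muB0 | exact: Sj_sub_B]. Qed.

End Meas.


Lemma find_j (R : realType) (s : nat) (x : R) : (1 < s)%N -> 0 < x ->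
  exists j : nat, ((s%:R : R) ^+ j)^-1 <= x /\ x < (s%:R : R) ^+ j /\ 1 <= (s%:R : R) ^+ j * x.
Proof.
move=> s1 x0.
set j := (Num.truncn (x + x^-1)).+1.
have hj : x + x^-1 < j%:R by apply: truncnS_gt.
have hsj : (j < s ^ j)%N by apply: ltn_expl.
have hsjR : j%:R < (s%:R : R) ^+ j by rewrite -natrX ltr_nat.
have xi : 0 < x^-1 by rewrite invr_gt0.
have h1 : x^-1 < (s%:R : R) ^+ j by lra.
have h2 : x < (s%:R : R) ^+ j by lra.
have sp : 0 < (s%:R : R) ^+ j by lra.
exists j; split; last split => //.
  by rewrite -(invrK x) lef_pV2 ?posrE // ltW.
have e : x^-1 * x = 1 by rewrite mulVf ?gt_eqF.
by have := ler_wpM2r (ltW x0) (ltW h1); rewrite e.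
Qed.

Lemma lam_pos (R : realType) (p s : nat) (A : {set 'I_p}) (x : R) : (1 < s)%N -> (s < p)%N ->
  #|A| = s -> 0 < x -> 0 < lambda s A x.
Proof.
move=> s1 sp cA x0.
have [j [_ [_ hj]]] := @find_j R s x s1 x0.
have NK : (0 < Num.truncn ((s%:R : R) ^+ j * x))%N by rewrite truncn_gt0.
have := @lam_bnd R p s A s1 sp x x0 j NK => /andP [h _].
have apos := @aseq_pos p s A (Num.truncn ((s%:R : R) ^+ j * x)) s1 cA ltac:(lia) NK.
have hp : 0 < (p%:R : R) ^+ j by rewrite exprn_gt0 // ltr0n; lia.
have ha : 0 < (aseq s A (Num.truncn ((s%:R : R) ^+ j * x)))%:R / (p%:R : R) ^+ j.
  by rewrite divr_gt0 // ltr0n.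
have hx := @powR_gt0 R x (logsp p s) x0.
have := lt_le_trans ha h.
by rewrite pmulr_lgt0.
Qed.

Theorem mainTheorem13 (R : realType) (p s : nat) (A : {set 'I_p})
  (hp : (3 <= p)%N) (hs2 : (2 <= s)%N) (hsp : (s < p)%N) (hA : #|A| = s)
  (alpha : R) (hm : mb s A <= alpha) (hM : alpha <= Mb s A) :
  (@lebesgue_measure R).-negligible
    [set x : R | 0 < x /\ lambda s A x = alpha].
Proof.
case: (leP alpha 0) => ha.
  apply: (negligibleS _ (negligible_set0 _)) => x [x0 lx].
  have := @lam_pos R p s A x hs2 hsp hA x0; rewrite lx; lra.
apply: (negligibleS _ (negligible_bigcup (fun j => @Sj_negl R p s A hs2 hsp alpha ha j))).
move=> x [x0 lx]; have [j [h1 [h2 _]]] := @find_j R s x hs2 x0.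
by exists j => //.
Qed.
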